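(* Let $f:[0,\infty)\to[0,\infty)$ be a convex function, let $\nu\in(0,1)$ and $t\in[0,1)\cup(1,\infty)$. Then $$\min\left\{\frac{1-\nu}{\nu},\frac{\nu}{1-\nu}\right\}\mathfrak C_{f,\frac12}(t,1)\le \mathfrak C_{f,\nu}(t,1)\le \max\left\{\frac{1-\nu}{\nu},\frac{\nu}{1-\nu}\right\}\mathfrak C_{f,\frac12}(t,1),$$ where in particular $\mathfrak C_{f,\frac12}(t,1)=\frac{1}{1-t}\int_t^1 f(\lambda)\,d\lambda$.
   Context: For real numbers $x,y$ and $\mu\in[0,1]$, write $x\nabla_\mu y:=(1-\mu)x+\mu y$. For a function $f$ Riemann integrable on the segment between $a$ and $b$, and $\nu\in[0,1]$, define $$\mathfrak C_{f,\nu}(a,b):=(1-\nu)\int_0^1 f\big(a\nabla_{\nu\lambda}b\big)\,d\lambda+\nu\int_0^1 f\big(b\nabla_{(1-\nu)\lambda}a\big)\,d\lambda .$$ *)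

(* Defs.v *)
From Stdlib Require Import Reals.
From Coquelicot Require Import Coquelicot.
Open Scope R_scope.

Definition wmean (mu x y : R) : R := (1 - mu) * x + mu * y.

Definition frakC (f : R -> R) (nu a b : R) : R :=
  (1 - nu) * RInt (fun lam => f (wmean (nu * lam) a b)) 0 1
  + nu * RInt (fun lam => f (wmean ((1 - nu) * lam) b a)) 0 1.

(* f : [0,oo) -> [0,oo) convex (only values on [0,oo) matter) *)
Definition convex_on_nonneg (f : R -> R) : Prop :=
  forall x y mu, 0 <= x -> 0 <= y -> 0 <= mu <= 1 ->
    f ((1 - mu) * x + mu * y) <= (1 - mu) * f x + mu * f y.

(* Main.v *)
Require Import Defs.
From Stdlib Require Import Reals Lra Psatz Classical.
From Coquelicot Require Import Coquelicot.
Open Scope R_scope.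

Lemma conv3 f : convex_on_nonneg f -> forall p q r, 0 <= p -> p < q < r ->
  (r - p) * f q <= (r - q) * f p + (q - p) * f r.
Proof.
  intros Hc p q r Hp [Hpq Hqr].
  set (mu := (q - p) / (r - p)).
  assert (Hmu : 0 <= mu <= 1).
  { unfold mu; split.
    - apply Rdiv_le_0_compat; lra.
    - apply Rmult_le_reg_r with (r - p); [lra|].
      unfold Rdiv; rewrite Rmult_assoc, Rinv_l by lra; lra. }
  pose proof (Hc p r mu Hp ltac:(lra) Hmu) as H0; revert H0.
  replace ((1 - mu) * p + mu * r) with q by (unfold mu; field; lra).
  intros H.
  replace ((r - q) * f p + (q - p) * f r) with ((r - p) * ((1 - mu) * f p + mu * f r))
    by (unfold mu; field; lra).
  apply Rmult_le_compat_l; lra.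
Qed.

Lemma cont_of f x0 : (forall eps, 0 < eps -> exists d, 0 < d /\
   forall x, Rabs (x - x0) < d -> Rabs (f x - f x0) < eps) -> continuous f x0.
Proof.
  intros H. apply continuity_pt_filterlim.
  intros eps Heps. destruct (H eps Heps) as [d [Hd Hx]].
  exists d; split; auto. intros x [_ Hxd]. apply Hx. exact Hxd.
Qed.

Lemma lip f : convex_on_nonneg f -> forall x0, 0 < x0 -> exists K, 0 <= K /\
  forall x, Rabs (x - x0) < x0 / 2 -> Rabs (f x - f x0) <= K * Rabs (x - x0).
Proof.
  intros Hc x0 Hx0.
  set (h := x0 / 2).
  set (D1 := f x0 - f (x0 - h)). set (D2 := f (x0 + h) - f x0).
  exists ((Rabs D1 + Rabs D2) / h). split.
  { apply Rdiv_le_0_compat; [|unfold h; lra].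
    pose proof (Rabs_pos D1); pose proof (Rabs_pos D2); lra. }
  intros x Hx. fold h in Hx.
  assert (Hh : 0 < h) by (unfold h; lra).
  apply Rmult_le_reg_l with h; [lra|].
  replace (h * ((Rabs D1 + Rabs D2) / h * Rabs (x - x0)))
    with ((Rabs D1 + Rabs D2) * Rabs (x - x0)) by (field; lra).
  pose proof (Rabs_pos D1); pose proof (Rabs_pos D2).
  pose proof (Rle_abs D1); pose proof (Rle_abs D2).
  pose proof (Rle_abs (-D1)) as HD1; pose proof (Rle_abs (-D2)) as HD2; rewrite Rabs_Ropp in HD1, HD2.
  apply Rabs_def2 in Hx.
  destruct (Rtotal_order x x0) as [Hlt|[Heq|Hgt]].
  -
    pose proof (conv3 f Hc (x0 - h) x x0 ltac:(unfold h in *; lra) ltac:(lra)) as C1.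
    pose proof (conv3 f Hc x x0 (x0 + h) ltac:(unfold h in *; lra) ltac:(lra)) as C2.
    rewrite Rabs_left1 with (x - x0) by lra.
    replace (x0 - (x0 - h)) with h in C1 by ring.
    replace (x0 + h - x) with (h + (x0 - x)) in C2 by ring.
    replace (x0 + h - x0) with h in C2 by ring.
    destruct (Rcase_abs (f x - f x0)) as [Hs|Hs]; [rewrite (Rabs_left (f x - f x0)) by lra | rewrite (Rabs_right (f x - f x0)) by lra].
    +
      assert (h * (f x - f x0) >= - (x0 - x) * D2) by (unfold D2; nra).
      nra.
    + assert (h * (f x - f x0) <= (x0 - x) * (- D1)) by (unfold D1; nra).
      nra.
  - subst. rewrite !Rminus_diag, Rabs_R0. lra.
  - pose proof (conv3 f Hc (x0 - h) x0 x ltac:(unfold h in *; lra) ltac:(lra)) as C1.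
    pose proof (conv3 f Hc x0 x (x0 + h) ltac:(unfold h in *; lra) ltac:(lra)) as C2.
    rewrite Rabs_right with (x - x0) by lra.
    replace (x0 - (x0 - h)) with h in C1 by ring.
    replace (x - (x0 - h)) with (h + (x - x0)) in C1 by ring.
    replace (x0 + h - x0) with h in C2 by ring.
    destruct (Rcase_abs (f x - f x0)) as [Hs|Hs]; [rewrite (Rabs_left (f x - f x0)) by lra | rewrite (Rabs_right (f x - f x0)) by lra].
    + assert (h * (f x - f x0) >= (x - x0) * D1) by (unfold D1; nra).
      nra.
    + assert (h * (f x - f x0) <= (x - x0) * D2) by (unfold D2; nra).
      nra.
Qed.

Lemma cont_pos f : convex_on_nonneg f -> forall z, 0 < z ->
  forall eps, 0 < eps -> exists d, 0 < d /\ d <= z / 2 /\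
   forall x, Rabs (x - z) < d -> Rabs (f x - f z) < eps.
Proof.
  intros Hc z Hz eps Heps.
  destruct (lip f Hc z Hz) as [K [HK HL]].
  exists (Rmin (z/2) (eps / (K + 1))). split; [|split].
  - apply Rmin_pos; [lra|]. apply Rdiv_lt_0_compat; lra.
  - apply Rmin_l.
  - intros x Hx.
    pose proof (Rmin_l (z/2) (eps / (K + 1))). pose proof (Rmin_r (z/2) (eps / (K + 1))).
    eapply Rle_lt_trans. apply HL. lra.
    pose proof (Rabs_pos (x - z)).
    assert (Rabs (x - z) * (K + 1) < eps).
    { apply Rlt_le_trans with (eps / (K + 1) * (K + 1)).
      apply Rmult_lt_compat_r; lra. right; field; lra. }
    nra.
Qed.

Definition uu (f : R -> R) x := (f 1 - f x) / (1 - x).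

Lemma uu_eq f x : x < 1 -> uu f x * (1 - x) = f 1 - f x.
Proof. intros; unfold uu; field; lra. Qed.

Lemma uu_mono f : convex_on_nonneg f -> forall x y, 0 <= x -> x < y -> y < 1 ->
  uu f x <= uu f y.
Proof.
  intros Hc x y Hx Hxy Hy.
  pose proof (conv3 f Hc x y 1 Hx ltac:(lra)) as C.
  pose proof (uu_eq f x ltac:(lra)). pose proof (uu_eq f y ltac:(lra)).
  destruct (Rle_or_lt (uu f x) (uu f y)) as [|Hlt]; auto.
  assert ((uu f x - uu f y) * ((1 - x) * (1 - y)) > 0).
  { apply Rmult_lt_0_compat; nra. }
  nra.
Qed.

Lemma lim0 f : convex_on_nonneg f -> exists L, forall eps, 0 < eps ->
  exists d, 0 < d /\ forall x, 0 < x < d -> Rabs (f x - L) < eps.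
Proof.
  intros Hc.
  set (E := fun r => exists x, 0 < x < 1/2 /\ r = - uu f x).
  assert (HB : bound E).
  { exists (- uu f 0). intros r [x [Hx ->]].
    pose proof (uu_mono f Hc 0 x ltac:(lra) ltac:(lra) ltac:(lra)). lra. }
  assert (HE : exists r, E r) by (exists (- uu f (1/4)); exists (1/4); split; [lra|auto]).
  destruct (completeness E HB HE) as [M [HM1 HM2]].
  set (S := - M).
  assert (HS : forall x, 0 < x < 1/2 -> S <= uu f x).
  { intros x Hx. assert (E (- uu f x)) by (exists x; auto). apply HM1 in H. unfold S; lra. }
  assert (HS2 : forall e, 0 < e -> exists x0, 0 < x0 < 1/2 /\ uu f x0 < S + e).
  { intros e He. apply NNPP. intros Hn.
    assert (is_upper_bound E (M - e)).
    { intros r [x [Hx ->]].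
      destruct (Rle_or_lt (S + e) (uu f x)) as [Hle|Hlt].
      - unfold S in Hle; lra.
      - exfalso; apply Hn; exists x; auto. }
    apply HM2 in H. lra. }
  exists (f 1 - S). intros eps Heps.
  destruct (HS2 (eps / 2) ltac:(lra)) as [x0 [Hx0 Hu0]].
  set (c := Rabs S + eps / 2 + 1).
  assert (Hc0 : 0 < c) by (unfold c; pose proof (Rabs_pos S); lra).
  exists (Rmin x0 (eps / 2 / c)). split.
  { apply Rmin_pos; [lra|]. apply Rdiv_lt_0_compat; lra. }
  intros x [Hx1 Hx2].
  pose proof (Rmin_l x0 (eps / 2 / c)). pose proof (Rmin_r x0 (eps / 2 / c)).
  pose proof (HS x ltac:(lra)) as H1.
  pose proof (uu_mono f Hc x x0 ltac:(lra) ltac:(lra) ltac:(lra)) as H2.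
  pose proof (uu_eq f x ltac:(lra)) as H3.
  assert (Hux : Rabs (uu f x) <= Rabs S + eps / 2).
  { apply Rabs_le. pose proof (Rle_abs S). pose proof (Rle_abs (-S)) as HS3. rewrite Rabs_Ropp in HS3. lra. }
  assert (Hxc : x * c < eps / 2).
  { apply Rlt_le_trans with (eps / 2 / c * c). apply Rmult_lt_compat_r; lra. right; field; lra. }
  replace (f x - (f 1 - S)) with ((S - uu f x) + x * uu f x) by nra.
  eapply Rle_lt_trans. apply Rabs_triang.
  rewrite Rabs_mult, (Rabs_right x) by lra.
  rewrite Rabs_left1 by lra.
  pose proof (Rabs_pos (uu f x)). unfold c in Hxc. nra.
Qed.

Lemma ex_int_pos f : convex_on_nonneg f -> forall a b, 0 <= a -> 0 <= b -> ex_RInt f a b.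
Proof.
  intros Hc.
  assert (K : forall a b, 0 <= a <= b -> ex_RInt f a b).
  { intros a b [Ha Hab].
    destruct (Req_dec a b) as [<-|Hne]; [apply ex_RInt_point|].
    destruct (lim0 f Hc) as [L HL].
    set (g := fun x => if Rle_dec x 0 then L else f x).
    assert (Hg : ex_RInt g a b).
    { apply (@ex_RInt_continuous R_CompleteNormedModule). intros z Hz.
      apply cont_of. intros eps Heps.
      destruct (Rle_dec z 0) as [Hz0|Hz0].
      - assert (z = 0) by (rewrite Rmin_left in Hz by lra; lra). subst z.
        destruct (HL eps Heps) as [d [Hd Hx]]. exists d; split; auto.
        intros x Hxd. unfold g. destruct (Rle_dec 0 0) as [_|n]; [|lra].
        destruct (Rle_dec x 0).
        + rewrite Rminus_diag, Rabs_R0; lra.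
        + apply Hx. rewrite Rminus_0_r in Hxd. apply Rabs_def2 in Hxd. lra.
      - destruct (cont_pos f Hc z ltac:(lra) eps Heps) as [d [Hd [Hdz Hx]]].
        exists d; split; auto. intros x Hxd. unfold g.
        destruct (Rle_dec z 0); [lra|]. apply Rabs_def2 in Hxd as Hxd'.
        destruct (Rle_dec x 0); [lra|]. auto. }
    apply ex_RInt_ext with g; auto.
    intros x Hx. unfold g. destruct (Rle_dec x 0); auto.
    rewrite Rmin_left in Hx by lra. lra. }
  intros a b Ha Hb. destruct (Rle_or_lt a b).
  - apply K; lra.
  - apply ex_RInt_swap. apply K; lra.
Qed.

Lemma comp (f : R -> R) u v : u <> 0 -> ex_RInt f v (u + v) ->
  RInt (fun y => f (u * y + v)) 0 1 = / u * RInt f v (u + v).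
Proof.
  intros Hu Hex.
  assert (Hex' : ex_RInt f (u * 0 + v) (u * 1 + v))
    by (replace (u * 0 + v) with v by ring; replace (u * 1 + v) with (u + v) by ring; auto).
  pose proof (RInt_comp_lin f u v 0 1 Hex') as E.
  pose proof (ex_RInt_comp_lin f u v 0 1 Hex') as X.
  replace (u * 0 + v) with v in E by ring. replace (u * 1 + v) with (u + v) in E by ring.
  rewrite <- E.
  transitivity (scal (/ u) (RInt (fun y => scal u (f (u * y + v))) 0 1)); [|reflexivity].
  rewrite <- RInt_scal; [|exact X].
  apply RInt_ext. intros x _. unfold scal; simpl; unfold mult; simpl. change (@eq R (f (u * x + v)) (/ u * (u * f (u * x + v)))). field; auto.
Qed.

Lemma frak_eq f : convex_on_nonneg f -> forall nu t, 0 < nu < 1 -> 0 <= t -> t <> 1 ->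
  frakC f nu t 1 = (1 - nu) / nu * (RInt f t ((1 - nu) * t + nu) / (1 - t))
     + nu / (1 - nu) * (RInt f ((1 - nu) * t + nu) 1 / (1 - t)).
Proof.
  intros Hc nu t Hnu Ht Ht1.
  unfold frakC.
  rewrite (RInt_ext (fun lam => f (wmean (nu * lam) t 1)) (fun y => f ((nu * (1 - t)) * y + t)))
    by (intros; unfold wmean; f_equal; ring).
  rewrite (RInt_ext (fun lam => f (wmean ((1 - nu) * lam) 1 t))
                    (fun y => f ((- ((1 - nu) * (1 - t))) * y + 1)))
    by (intros; unfold wmean; f_equal; ring).
  assert (H1 : nu * (1 - t) <> 0) by (apply Rmult_integral_contrapositive; split; lra).
  assert (H2 : - ((1 - nu) * (1 - t)) <> 0)
    by (apply Ropp_neq_0_compat, Rmult_integral_contrapositive; split; lra).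
  rewrite comp by (first [assumption | apply ex_int_pos; [exact Hc|nra|nra]]).
  rewrite comp by (first [assumption | apply ex_int_pos; [exact Hc|nra|nra]]).
  replace (nu * (1 - t) + t) with ((1 - nu) * t + nu) by ring.
  replace (- ((1 - nu) * (1 - t)) + 1) with ((1 - nu) * t + nu) by ring.
  rewrite <- (opp_RInt_swap f ((1 - nu) * t + nu) 1) by (apply ex_int_pos; [exact Hc|nra|nra]).
  unfold opp; simpl. field. split; lra.
Qed.

Lemma PQ (f : R -> R) : (forall x, 0 <= x -> 0 <= f x) -> convex_on_nonneg f ->
  forall nu t, 0 < nu < 1 -> 0 <= t -> t <> 1 ->
  let m := (1 - nu) * t + nu in
  0 <= RInt f t m / (1 - t) /\ 0 <= RInt f m 1 / (1 - t) /\
  RInt f t m / (1 - t) + RInt f m 1 / (1 - t) = RInt f t 1 / (1 - t).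
Proof.
  intros Hp Hc nu t Hnu Ht Ht1 m.
  assert (Xtm : ex_RInt f t m) by (apply ex_int_pos; [exact Hc|lra|unfold m; nra]).
  assert (Xm1 : ex_RInt f m 1) by (apply ex_int_pos; [exact Hc|unfold m; nra|lra]).
  assert (Ch : RInt f t m + RInt f m 1 = RInt f t 1).
  { pose proof (RInt_Chasles f t m 1 Xtm Xm1) as E. exact E. }
  split; [|split].
  3: { rewrite <- Ch. field. lra. }
  - destruct (Rlt_or_le t 1) as [Hl|Hg].
    + apply Rdiv_le_0_compat; [|lra]. apply RInt_ge_0; auto; [unfold m; nra|].
      intros x Hx. apply Hp. lra.
    + assert (0 <= RInt f m t).
      { apply RInt_ge_0; [unfold m; nra| apply ex_RInt_swap; auto |]. intros x Hx. apply Hp. unfold m in Hx; nra. }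
      rewrite <- (opp_RInt_swap f m t) by (apply ex_RInt_swap; auto).
      unfold opp; simpl. replace (- RInt f m t / (1 - t)) with (RInt f m t / (t - 1)) by (field; lra).
      apply Rdiv_le_0_compat; lra.
  - destruct (Rlt_or_le t 1) as [Hl|Hg].
    + apply Rdiv_le_0_compat; [|lra]. apply RInt_ge_0; auto; [unfold m; nra|].
      intros x Hx. apply Hp. unfold m in Hx; nra.
    + assert (0 <= RInt f 1 m).
      { apply RInt_ge_0; [unfold m; nra| apply ex_RInt_swap; auto |]. intros x Hx. apply Hp. lra. }
      rewrite <- (opp_RInt_swap f 1 m) by (apply ex_RInt_swap; auto).
      unfold opp; simpl. replace (- RInt f 1 m / (1 - t)) with (RInt f 1 m / (t - 1)) by (field; lra).
      apply Rdiv_le_0_compat; lra.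
Qed.

Theorem theorem2p3 (f : R -> R) (nu t : R) :
  (forall x, 0 <= x -> 0 <= f x) ->
  convex_on_nonneg f ->
  0 < nu < 1 ->
  0 <= t -> t <> 1 ->
  Rmin ((1 - nu) / nu) (nu / (1 - nu)) * frakC f (1/2) t 1 <= frakC f nu t 1 /\
  frakC f nu t 1 <= Rmax ((1 - nu) / nu) (nu / (1 - nu)) * frakC f (1/2) t 1 /\
  frakC f (1/2) t 1 = / (1 - t) * RInt f t 1.
Proof.
  intros Hp Hc Hnu Ht Ht1.
  pose proof (PQ f Hp Hc nu t Hnu Ht Ht1) as [P0 [Q0 S]]. simpl in P0, Q0, S.
  pose proof (PQ f Hp Hc (1/2) t ltac:(lra) Ht Ht1) as [_ [_ S2]]. simpl in S2.
  rewrite (frak_eq f Hc nu t Hnu Ht Ht1).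
  rewrite (frak_eq f Hc (1/2) t ltac:(lra) Ht Ht1).
  replace ((1 - 1/2) / (1/2)) with 1 by field. replace ((1/2) / (1 - 1/2)) with 1 by field.
  rewrite !Rmult_1_l, S2, <- S.
  set (P := RInt f t ((1 - nu) * t + nu) / (1 - t)) in *.
  set (Q := RInt f ((1 - nu) * t + nu) 1 / (1 - t)) in *.
  set (A := (1 - nu) / nu). set (B := nu / (1 - nu)).
  pose proof (Rmin_l A B). pose proof (Rmin_r A B).
  pose proof (Rmax_l A B). pose proof (Rmax_r A B).
  split; [|split].
  - nra.
  - nra.
  - rewrite S. field. lra.
Qed.
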